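(* Let $\nu>2$, $\kappa\in(0,1/2-1/\nu)$, $C\ge0$ and $R,J:(0,\infty)\to[0,\infty)$, and define $\gamma(m,\delta)=C\,m\,(R(\delta)+J(\delta)m^{-\kappa})^2$ for $m\in\mathbb N$, $\delta>0$. Then: (i) For every $\delta>0$, the pair $(\nu/2,\gamma(\cdot,\delta))$ fulfills condition (S) with index $Q=2^{2\kappa}\in[1,2^{1-2/\nu})$. (ii) For every $\delta>0$, there is a constant $C'\ge0$ such that for each $0<\varepsilon\le1$, $\limsup_{n\to\infty}\gamma(\lfloor n\varepsilon\rfloor,\delta)/n\le C'\varepsilon$ (with the convention $\gamma(0,\delta)=0$). (iii) If $\lim_{\delta\downarrow0}R(\delta)=0$, then $\lim_{\delta\downarrow0}\limsup_{n\to\infty}\gamma(n,\delta)/n=0$.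
   Context: Condition (S): for $\alpha>1$ and $g:\mathbb N\to\mathbb R$, the pair $(\alpha,g)$ fulfills (S) with index $Q\in[1,2^{(\alpha-1)/\alpha})$ if (i) $g\ge0$, (ii) $g$ is nondecreasing, and (iii) $g(i)+g(j-i)\le Q g(j)$ for all $1\le i<j$. *)

(* Defs.v *)
From Stdlib Require Import Reals ZArith.
From Coquelicot Require Import Coquelicot.
Open Scope R_scope.

Definition cond_S (alpha : R) (g : nat -> R) (Q : R) : Prop :=
  1 < alpha /\
  1 <= Q < Rpower 2 ((alpha - 1) / alpha) /\
  (forall n : nat, (1 <= n)%nat -> 0 <= g n) /\
  (forall m n : nat, (1 <= m)%nat -> (m <= n)%nat -> g m <= g n) /\
  (forall i j : nat, (1 <= i)%nat -> (i < j)%nat -> g i + g (j - i)%nat <= Q * g j).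

Definition gamma (C kappa : R) (Rf Jf : R -> R) (m : nat) (delta : R) : R :=
  match m with
  | O => 0
  | S _ => C * INR m * (Rf delta + Jf delta * Rpower (INR m) (- kappa)) ^ 2
  end.

Definition nat_floor (x : R) : nat := Z.to_nat (Int_part x).

(* Main.v *)
Require Import Defs.
From Stdlib Require Import Reals ZArith Lra Lia.
From Coquelicot Require Import Coquelicot.
Open Scope R_scope.

Lemma ln_le_sub1 y : 0 < y -> ln y <= y - 1.
Proof. intros Hy. generalize (exp_ineq1_le (ln y)). rewrite exp_ln by lra. lra. Qed.

Lemma young_pow s r : 0 < s -> 0 < r < 1 -> Rpower s r <= r * s + (1 - r).
Proof.
  intros Hs Hr. set (w := r * s + (1 - r)).
  assert (Hw : 0 < w) by (unfold w; nra).
  unfold Rpower. rewrite <- (exp_ln w) by exact Hw.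
  assert (r * ln s <= ln w).
  { assert (H1 := ln_le_sub1 (s / w) ltac:(apply Rdiv_lt_0_compat; lra)).
    assert (H2 := ln_le_sub1 (/ w) ltac:(apply Rinv_0_lt_compat; lra)).
    rewrite ln_div in H1 by lra. rewrite ln_Rinv in H2 by lra.
    assert (r * (s / w - 1) + (1 - r) * (/ w - 1) = 0).
    { unfold w in *. field. lra. }
    nra. }
  destruct (Rle_lt_or_eq_dec _ _ H) as [H'|H'].
  - left. apply exp_increasing. exact H'.
  - rewrite H'. lra.
Qed.

Lemma pow_mean x y r : 0 < x -> 0 < y -> 0 < r < 1 ->
  Rpower x r + Rpower y r <= Rpower 2 (1 - r) * Rpower (x + y) r.
Proof.
  intros Hx Hy Hr. set (c := (x + y) / 2).
  assert (Hc : 0 < c) by (unfold c; lra).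
  assert (Ex : x = (x / c) * c) by (field; lra).
  assert (Ey : y = (y / c) * c) by (field; lra).
  rewrite Ex at 1. rewrite Ey at 1.
  rewrite <- !Rpower_mult_distr by (try apply Rdiv_lt_0_compat; lra).
  assert (Hc' : 0 < Rpower c r) by apply exp_pos.
  assert (H1 := young_pow (x / c) r ltac:(apply Rdiv_lt_0_compat; lra) Hr).
  assert (H2 := young_pow (y / c) r ltac:(apply Rdiv_lt_0_compat; lra) Hr).
  assert (E : Rpower 2 (1 - r) * Rpower (x + y) r = 2 * Rpower c r).
  { replace (x + y) with (2 * c) by (unfold c; field).
    rewrite <- Rpower_mult_distr by lra.
    rewrite <- Rmult_assoc, <- Rpower_plus. replace (1 - r + r) with 1 by ring.
    rewrite Rpower_1; lra. }
  rewrite E.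
  assert (r * (x / c) + (1 - r) + (r * (y / c) + (1 - r)) = 2).
  { unfold c. field. lra. }
  nra.
Qed.

Lemma lim_pow_neg k : 0 < k -> is_lim_seq (fun n => Rpower (INR n) (- k)) 0.
Proof.
  intros Hk. unfold Rpower.
  apply (filterlim_comp _ _ _ INR (fun x => exp (- k * ln x)) eventually (Rbar_locally p_infty)).
  - exact is_lim_seq_INR.
  - apply (is_lim_comp exp (fun x => - k * ln x) p_infty 0 m_infty).
    + exact is_lim_exp_m.
    + assert (E : Rbar_mult (- k) p_infty = m_infty).
      { apply is_Rbar_mult_unique. apply is_Rbar_mult_sym.
        apply is_Rbar_mult_p_infty_neg. simpl; lra. }
      rewrite <- E. apply is_lim_scal_l. exact is_lim_ln_p.
    + exists 0. intros y _. discriminate.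
Qed.

Lemma gamma_form C k Rf Jf m d : (1 <= m)%nat ->
  gamma C k Rf Jf m d = C * Rpower (INR m) (1 - 2 * k) * (Rf d * Rpower (INR m) k + Jf d) ^ 2.
Proof.
  intros Hm. destruct m as [|m']; [lia|].
  change (gamma C k Rf Jf (S m') d) with
    (C * INR (S m') * (Rf d + Jf d * Rpower (INR (S m')) (- k)) ^ 2).
  set (x := INR (S m')).
  assert (Hx : 0 < x) by (unfold x; apply lt_0_INR; lia).
  assert (Hab : Rpower x k * Rpower x (- k) = 1).
  { rewrite <- Rpower_plus. replace (k + - k) with 0 by ring. apply Rpower_O; lra. }
  assert (Ex : x = Rpower x (1 - 2 * k) * Rpower x k * Rpower x k).
  { rewrite <- !Rpower_plus. replace (1 - 2 * k + k + k) with 1 by ring.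
    rewrite Rpower_1; lra. }
  assert (E : Rf d * Rpower x k + Jf d = Rpower x k * (Rf d + Jf d * Rpower x (- k))).
  { transitivity (Rf d * Rpower x k + Jf d * (Rpower x k * Rpower x (- k))).
    - rewrite Hab; ring.
    - ring. }
  rewrite E. rewrite Ex at 1. ring.
Qed.

Lemma nat_floor_le x : 0 <= x -> INR (nat_floor x) <= x.
Proof.
  intros Hx. unfold nat_floor. destruct (base_Int_part x) as [H1 H2].
  destruct (Z_le_gt_dec 0 (Int_part x)) as [Hz|Hz].
  - rewrite INR_IZR_INZ, Z2Nat.id by exact Hz. exact H1.
  - replace (Z.to_nat (Int_part x)) with 0%nat by lia. simpl. exact Hx.
Qed.

Lemma gamma_le C k Rf Jf m d : 0 <= C -> 0 < k -> 0 <= Rf d -> 0 <= Jf d ->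
  gamma C k Rf Jf m d <= C * (Rf d + Jf d) ^ 2 * INR m.
Proof.
  intros HC Hk HR HJ. destruct m as [|m'].
  - simpl. lra.
  - change (gamma C k Rf Jf (S m') d) with
      (C * INR (S m') * (Rf d + Jf d * Rpower (INR (S m')) (- k)) ^ 2).
    assert (Hx : 1 <= INR (S m')) by (apply (le_INR 1); lia).
    assert (Hp : Rpower (INR (S m')) (- k) <= 1).
    { rewrite <- (Rpower_O (INR (S m'))) by lra. apply Rle_Rpower; lra. }
    assert (Hp0 : 0 < Rpower (INR (S m')) (- k)) by apply exp_pos.
    assert (H0 : 0 <= Rf d + Jf d * Rpower (INR (S m')) (- k)) by nra.
    assert (H1 : Rf d + Jf d * Rpower (INR (S m')) (- k) <= Rf d + Jf d) by nra.
    assert (H2 : (Rf d + Jf d * Rpower (INR (S m')) (- k)) ^ 2 <= (Rf d + Jf d) ^ 2)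
      by (apply pow_incr; lra).
    assert (0 <= C * INR (S m')) by nra.
    nra.
Qed.

Theorem lemma2p5 (nu kappa C : R) (Rf Jf : R -> R)
  (Hnu : 2 < nu)
  (Hkappa : 0 < kappa < 1 / 2 - 1 / nu)
  (HC : 0 <= C)
  (HR : forall d : R, 0 < d -> 0 <= Rf d)
  (HJ : forall d : R, 0 < d -> 0 <= Jf d) :
  (* (i) *)
  (forall delta : R, 0 < delta ->
     cond_S (nu / 2) (fun m => gamma C kappa Rf Jf m delta) (Rpower 2 (2 * kappa))) /\
  (* (ii) *)
  (forall delta : R, 0 < delta ->
     exists C' : R, 0 <= C' /\
       forall eps : R, 0 < eps <= 1 ->
         Rbar_le
           (LimSup_seq (fun n : nat =>
              gamma C kappa Rf Jf (nat_floor (INR n * eps)) delta / INR n))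
           (Finite (C' * eps))) /\
  (* (iii) *)
  (filterlim Rf (at_right 0) (locally 0) ->
     filterlim (fun delta : R =>
                  LimSup_seq (fun n : nat => gamma C kappa Rf Jf n delta / INR n))
               (at_right 0) (Rbar_locally (Finite 0))).
Proof.
  assert (Hinv : 0 < 1 / nu) by (apply Rdiv_lt_0_compat; lra).
  assert (Hk2 : 2 * kappa < 1 - 2 / nu).
  { replace (2 / nu) with (2 * (1 / nu)) by (field; lra). lra. }
  assert (Hk1 : 0 < 1 - 2 * kappa < 1) by lra.
  split; [|split].
  - intros d Hd. specialize (HR d Hd). specialize (HJ d Hd).
    unfold cond_S. split; [lra|]. split; [split|].
    + rewrite <- (Rpower_O 2) at 1 by lra. apply Rle_Rpower; lra.
    + apply Rpower_lt; [lra|].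
      replace ((nu / 2 - 1) / (nu / 2)) with (1 - 2 / nu) by (field; lra). lra.
    + split; [|split].
      * intros n Hn. rewrite gamma_form by exact Hn.
        assert (0 < Rpower (INR n) (1 - 2 * kappa)) by apply exp_pos.
        assert (0 <= (Rf d * Rpower (INR n) kappa + Jf d) ^ 2) by (apply pow2_ge_0).
        apply Rmult_le_pos; [apply Rmult_le_pos|]; lra.
      * intros m n Hm Hmn. rewrite !gamma_form by lia.
        assert (Hm0 : 0 < INR m) by (apply lt_0_INR; lia).
        assert (Hmn' : INR m <= INR n) by (apply le_INR; lia).
        assert (A1 : Rpower (INR m) (1 - 2 * kappa) <= Rpower (INR n) (1 - 2 * kappa))
          by (apply Rle_Rpower_l; lra).
        assert (A2 : Rpower (INR m) kappa <= Rpower (INR n) kappa)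
          by (apply Rle_Rpower_l; lra).
        assert (0 < Rpower (INR m) (1 - 2 * kappa)) by apply exp_pos.
        assert (0 < Rpower (INR m) kappa) by apply exp_pos.
        assert (A3 : (Rf d * Rpower (INR m) kappa + Jf d) ^ 2
                     <= (Rf d * Rpower (INR n) kappa + Jf d) ^ 2)
          by (apply pow_incr; nra).
        assert (0 <= (Rf d * Rpower (INR m) kappa + Jf d) ^ 2) by apply pow2_ge_0.
        apply Rmult_le_compat; try nra.
      * intros i j Hi Hij. rewrite !gamma_form by lia.
        rewrite minus_INR by lia.
        set (a := INR i). set (b := INR j - INR i).
        assert (Ha : 0 < a) by (unfold a; apply lt_0_INR; lia).
        assert (Hb : 0 < b) by (unfold b; assert (INR i < INR j) by (apply lt_INR; lia); lra).
        replace (INR j) with (a + b) by (unfold a, b; ring).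
        set (r := 1 - 2 * kappa).
        assert (PM := pow_mean a b r Ha Hb Hk1).
        replace (1 - r) with (2 * kappa) in PM by (unfold r; ring).
        assert (Sa : (Rf d * Rpower a kappa + Jf d) ^ 2 <= (Rf d * Rpower (a + b) kappa + Jf d) ^ 2).
        { apply pow_incr. assert (0 < Rpower a kappa) by apply exp_pos.
          assert (Rpower a kappa <= Rpower (a + b) kappa) by (apply Rle_Rpower_l; lra). nra. }
        assert (Sb : (Rf d * Rpower b kappa + Jf d) ^ 2 <= (Rf d * Rpower (a + b) kappa + Jf d) ^ 2).
        { apply pow_incr. assert (0 < Rpower b kappa) by apply exp_pos.
          assert (Rpower b kappa <= Rpower (a + b) kappa) by (apply Rle_Rpower_l; lra). nra. }
        assert (0 < Rpower a r) by apply exp_pos.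
        assert (0 < Rpower b r) by apply exp_pos.
        set (T := (Rf d * Rpower (a + b) kappa + Jf d) ^ 2) in *.
        assert (0 <= T) by (unfold T; apply pow2_ge_0).
        assert (Rpower a r * (Rf d * Rpower a kappa + Jf d) ^ 2
                + Rpower b r * (Rf d * Rpower b kappa + Jf d) ^ 2
                <= Rpower 2 (2 * kappa) * Rpower (a + b) r * T) by nra.
        assert (C * (Rpower a r * (Rf d * Rpower a kappa + Jf d) ^ 2
                + Rpower b r * (Rf d * Rpower b kappa + Jf d) ^ 2)
                <= C * (Rpower 2 (2 * kappa) * Rpower (a + b) r * T))
          by (apply Rmult_le_compat_l; lra).
        replace (a + b - a) with b by ring. lra.
  - intros d Hd. specialize (HR d Hd). specialize (HJ d Hd).
    exists (C * (Rf d + Jf d) ^ 2). split.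
    { apply Rmult_le_pos; [lra | apply pow2_ge_0]. }
    intros eps Heps.
    rewrite <- LimSup_seq_const. apply LimSup_le.
    exists 1%nat. intros n Hn.
    assert (Hn0 : 0 < INR n) by (apply lt_0_INR; lia).
    assert (Hf := nat_floor_le (INR n * eps) ltac:(nra)).
    assert (Hg := gamma_le C kappa Rf Jf (nat_floor (INR n * eps)) d HC (proj1 Hkappa) HR HJ).
    assert (HC' : 0 <= C * (Rf d + Jf d) ^ 2) by (apply Rmult_le_pos; [lra | apply pow2_ge_0]).
    apply Rle_div_l; [lra|].
    nra.
  - intros HRlim.
    apply filterlim_ext_loc with (f := fun d => Finite (C * Rf d ^ 2)).
    + exists (mkposreal 1 Rlt_0_1). intros d _ Hd. simpl in Hd.
      specialize (HR d Hd). specialize (HJ d Hd).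
      symmetry. apply is_LimSup_seq_unique. apply is_lim_LimSup_seq.
      apply is_lim_seq_ext_loc with
        (u := fun n => C * (Rf d + Jf d * Rpower (INR n) (- kappa)) ^ 2).
      * exists 1%nat. intros n Hn. destruct n as [|n']; [lia|].
        change (gamma C kappa Rf Jf (S n') d) with
          (C * INR (S n') * (Rf d + Jf d * Rpower (INR (S n')) (- kappa)) ^ 2).
        assert (0 < INR (S n')) by (apply lt_0_INR; lia).
        field. lra.
      * replace (C * Rf d ^ 2) with ((fun x => C * (Rf d + Jf d * x) ^ 2) 0)
          by (simpl; ring).
        apply (is_lim_seq_continuous (fun x => C * (Rf d + Jf d * x) ^ 2)).
        -- reg.
        -- apply lim_pow_neg. lra.
    + assert (Hc : filterlim (fun x => C * x ^ 2) (locally 0) (locally 0)).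
      { assert (H := proj1 (continuity_pt_filterlim (fun x => C * x ^ 2) 0) ltac:(reg)).
        cbv beta in H. replace (C * 0 ^ 2) with 0 in H by ring. exact H. }
      assert (H := filterlim_comp _ _ _ Rf (fun x => C * x ^ 2) _ _ _ HRlim Hc).
      intros P HP. exact (H (fun x => P (Finite x)) HP).
Qed.
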